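(* Let $\vec d=(\vec a,\vec b)$ be a bidegree sequence of length $n$ with $\sum_i a_i=\sum_i b_i=n\bar c$ and $m:=\min\vec d\le n-1$. Define $k_*=m+1+\sqrt{(m+1)^2+n(\bar c-2m)}$, and let $k=\lceil k_*\rceil$ if $(m+1)^2+n(\bar c-2m)\ge0$ (i.e. $k_*$ is real) and $k=1$ otherwise. If $$\max\vec d\le\min\Big(\Big\lfloor n\frac{\bar c-m}{k}+m\Big\rfloor,\ n-1\Big),$$ then $\vec d$ is graphic.
   Context: A bidegree sequence of length $n$ is a pair $\vec d=(\vec a,\vec b)$ with $\vec a=(a_1,\dots,a_n)\in\mathbb{N}_0^n$ and $\vec b=(b_1,\dots,b_n)\in\mathbb{N}_0^n$. It is graphic with loops if there is an $n\times n$ matrix with entries in $\{0,1\}$ whose $i$th row sum is $a_i$ and whose $i$th column sum is $b_i$ for every $i\in[1..n]$; it is graphic if such a matrix exists with all diagonal entries equal to $0$. $\max\vec d$ and $\min\vec d$ denote the maximum and minimum over all $2n$ entries $a_1,\dots,a_n,b_1,\dots,b_n$. The number $\bar c$ (the average degree) is defined by $\sum_i a_i=\sum_i b_i=n\bar c$. *)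

(* Defs.v *)
From mathcomp Require Import all_boot.
From Stdlib Require Import Reals ZArith.

Set Implicit Arguments.
Unset Strict Implicit.
Unset Printing Implicit Defensive.

(* graphic with loops: some 0/1 matrix (relation M on 'I_n) has row sums a
   and column sums b. *)
Definition graphic_with_loops (n : nat) (a b : 'I_n -> nat) : Prop :=
  exists M : rel 'I_n,
    (forall i, #|[set j | M i j]| = a i) /\ (forall j, #|[set i | M i j]| = b j).

Definition graphic (n : nat) (a b : 'I_n -> nat) : Prop :=
  exists M : rel 'I_n,
    (forall i, #|[set j | M i j]| = a i) /\ (forall j, #|[set i | M i j]| = b j)
    /\ (forall i, ~~ M i i).

(* max d over all 2n entries (0 for n = 0). *)
Definition dmax (n : nat) (a b : 'I_n -> nat) : nat :=
  \max_(i < n) maxn (a i) (b i).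

(* min d over all 2n entries (meaningful for n > 0). *)
Definition dmin (n : nat) (a b : 'I_n -> nat) : nat :=
  \big[minn/dmax a b]_(i < n) minn (a i) (b i).

(* floor and ceiling on Stdlib reals: up x is the integer with x < up x <= x+1 *)
Definition Rfloor (x : R) : Z := (up x - 1)%Z.
Definition Rceil (x : R) : Z := (- Rfloor (- x))%Z.

Definition cbar (n : nat) (a : 'I_n -> nat) : R :=
  (INR (\sum_(i < n) a i) / INR n)%R.

Definition disc (n : nat) (a b : 'I_n -> nat) : R :=
  let m := INR (dmin a b) in
  ((m + 1) ^ 2 + INR n * (cbar a - 2 * m))%R.

Definition kstar (n : nat) (a b : 'I_n -> nat) : R :=
  (INR (dmin a b) + 1 + sqrt (disc a b))%R.

Definition kk (n : nat) (a b : 'I_n -> nat) : Z :=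
  if Rle_dec 0 (disc a b) then Rceil (kstar a b) else 1%Z.

Definition bound6 (n : nat) (a b : 'I_n -> nat) : Z :=
  Rfloor (INR n * (cbar a - INR (dmin a b)) / IZR (kk a b) + INR (dmin a b))%R.

(* Main.v *)
Require Import Defs.
From mathcomp Require Import all_boot zify.
Set Implicit Arguments. Unset Strict Implicit. Unset Printing Implicit Defensive.


Section Real.
Variable T : finType.
Implicit Types (E F : {set T * T}) (I K : {set T}) (a b : T -> nat).

Definition cnt E I K := \sum_(x in E) ((x.1 \in I) && (x.2 \notin K) : nat).
Definition cutcond E a b := forall I K,
  \sum_(i in I) a i <= \sum_(j in K) b j + cnt E I K.
Definition realizes E a b := exists F : {set T * T}, F \subset E /\
  (forall x, #|[set y | (x, y) \in F]| = a x) /\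
  (forall y, #|[set x | (x, y) \in F]| = b y).

Lemma cntD1 E e I K : e \in E ->
  cnt E I K = ((e.1 \in I) && (e.2 \notin K)) + cnt (E :\ e) I K.
Proof. by move=> eE; rewrite /cnt (big_setD1 _ eE). Qed.

Lemma cnt_monoI E I1 I2 K : I1 \subset I2 -> cnt E I1 K <= cnt E I2 K.
Proof.
move=> /subsetP s; apply: leq_sum => x _.
by case: (x.1 \in I1) (s x.1) => //= ->.
Qed.

Lemma cnt_monoK E I K1 K2 : K1 \subset K2 -> cnt E I K2 <= cnt E I K1.
Proof.
move=> /subsetP s; apply: leq_sum => x _.
case: (x.1 \in I) => //=; case h1: (x.2 \in K1) => /=; [by rewrite (s _ h1) | exact: leq_b1].
Qed.

Lemma cnt_submod E I1 I2 K1 K2 :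
  cnt E (I1 :|: I2) (K1 :|: K2) + cnt E (I1 :&: I2) (K1 :&: K2)
  <= cnt E I1 K1 + cnt E I2 K2.
Proof.
rewrite /cnt -!big_split /=; apply: leq_sum => x _; rewrite !inE.
by case: (x.1 \in I1); case: (x.1 \in I2); case: (x.2 \in K1); case: (x.2 \in K2).
Qed.

Lemma sum_modular a I1 I2 :
  \sum_(i in I1 :|: I2) a i + \sum_(i in I1 :&: I2) a i =
  \sum_(i in I1) a i + \sum_(i in I2) a i.
Proof.
rewrite (@big_setID _ _ _ _ (I1 :|: I2) I1) (@big_setID _ _ _ _ I2 I1).
have -> : (I1 :|: I2) :&: I1 = I1 by apply/setP=> x; rewrite !inE; case: (x \in I1); case: (x \in I2).
have -> : (I1 :|: I2) :\: I1 = I2 :\: I1 by apply/setP=> x; rewrite !inE; case: (x \in I1); case: (x \in I2).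
have -> : I2 :&: I1 = I1 :&: I2 by rewrite setIC.
by rewrite -addnA (addnC (\sum_(i in I2 :\: I1) a i)).
Qed.

Lemma sumT a : \sum_(x in [set: T]) a x = \sum_x a x.
Proof. by apply: eq_bigl => x; rewrite in_setT. Qed.

Lemma sum_dec a i I : 0 < a i ->
  \sum_(x in I) (a x - (x == i)) + (i \in I) = \sum_(x in I) a x.
Proof.
move=> ai; case iI: (i \in I).
- rewrite !(big_setD1 _ iI) eqxx /=.
  rewrite (eq_bigr a); last by move=> x; rewrite !inE => /andP[xi _]; rewrite (negbTE xi) subn0.
  by rewrite addnAC subnK.
- rewrite addn0; apply: eq_bigr => x xI.
  have -> : (x == i) = false by apply/eqP => xi; rewrite -xi xI in iI.
  by rewrite subn0.
Qed.

Lemma deg_row (F : {set T * T}) i j x : (i, j) \notin F ->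
  #|[set y | (x, y) \in (i, j) |: F]| = #|[set y | (x, y) \in F]| + (x == i).
Proof.
move=> nF; case: (eqVneq x i) => [->|xi].
- have -> : [set y | (i, y) \in (i, j) |: F] = j |: [set y | (i, y) \in F].
    by apply/setP => y; rewrite !inE xpair_eqE eqxx.
  by rewrite cardsU1 inE nF addnC.
- rewrite addn0; apply: eq_card => y; rewrite !inE xpair_eqE.
  by rewrite (negbTE xi).
Qed.

Lemma deg_col (F : {set T * T}) i j y : (i, j) \notin F ->
  #|[set x | (x, y) \in (i, j) |: F]| = #|[set x | (x, y) \in F]| + (y == j).
Proof.
move=> nF; case: (eqVneq y j) => [->|yj].
- have -> : [set x | (x, j) \in (i, j) |: F] = i |: [set x | (x, j) \in F].
    by apply/setP => x; rewrite !inE xpair_eqE eqxx andbT.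
  by rewrite cardsU1 inE nF addnC.
- rewrite addn0; apply: eq_card => x; rewrite !inE xpair_eqE.
  by rewrite (negbTE yj) andbF.
Qed.

Lemma le_sum1 a x : a x <= \sum_y a y.
Proof. by rewrite (bigD1 x) //= leq_addr. Qed.

Theorem realize E a b : \sum_x a x = \sum_x b x -> cutcond E a b -> realizes E a b.
Proof.
have [N] := ubnP #|E|; elim: N E a b => // N IH E a b ltEN sab cut.
case: (set_0Vmem E) => [E0|[[i j] eE]].
  have c0 := cut setT set0.
  rewrite big_set0 E0 /cnt big_set0 sumT leqn0 in c0.
  have a0 x : a x = 0 by apply/eqP; rewrite -leqn0 -(eqP c0) le_sum1.
  have b0 y : b y = 0 by apply/eqP; rewrite -leqn0 -(eqP c0) sab le_sum1.
  exists set0; split; first exact: sub0set.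
  split=> x; rewrite ?a0 ?b0 -(cards0 T); apply: eq_card => y; by rewrite !inE.
set e := (i, j) in eE.
have ltE' : #|E :\ e| < N.
  by move: ltEN; rewrite (cardsD1 e E) eE add1n ltnS.
case: (boolP [forall I : {set T}, [forall K : {set T},
    \sum_(x in I) a x <= \sum_(y in K) b y + cnt (E :\ e) I K]]).
  move=> /forallP H.
  have [F [FE Fd]] := IH (E :\ e) a b ltE' sab (fun I K => (forallP (H I)) K).
  exists F; split=> //; apply: subset_trans FE _; exact: subsetDl.
rewrite negb_forall => /existsP [I1]; rewrite negb_forall => /existsP [K1].
rewrite -ltnNge => fail1.
have c1 := cut I1 K1; rewrite (cntD1 _ _ eE) /= in c1.
have [iI1 jK1] : i \in I1 /\ j \notin K1.
  move: c1; case: (i \in I1); case: (j \in K1) => //= c1; rewrite add0n in c1;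
  by rewrite ltnNge c1 in fail1.
rewrite iI1 jK1 /= in c1.
have ai : 0 < a i.
  have c := cut (I1 :\ i) K1; rewrite (cntD1 _ _ eE) /= in c.
  rewrite !inE eqxx /= add0n in c.
  have m1 := cnt_monoI (E :\ e) K1 (subsetDl I1 [set i]).
  move: fail1; rewrite (big_setD1 _ iI1) /=.
  set s1 := \sum_(i0 in I1 :\ i) a i0 in c *.
  set s2 := \sum_(j in K1) b j in c *.
  set x0 := cnt (E :\ e) (I1 :\ i) K1 in c m1 *.
  set x1 := cnt (E :\ e) I1 K1 in m1 *.
  lia.
have bj : 0 < b j.
  have c := cut I1 (j |: K1); rewrite (cntD1 _ _ eE) /= in c.
  rewrite !inE eqxx /= andbF add0n in c.
  have m1 := cnt_monoK (E :\ e) I1 (subsetUr [set j] K1).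
  move: c; rewrite (big_setU1 _ jK1) /=.
  set s1 := \sum_(i0 in I1) a i0 in fail1 *.
  set s2 := \sum_(j in K1) b j in fail1 *.
  set x0 := cnt (E :\ e) I1 (j |: K1) in m1 *.
  set x1 := cnt (E :\ e) I1 K1 in m1 fail1 *.
  lia.
set a' := fun x => a x - (x == i).
set b' := fun y => b y - (y == j).
have sab' : \sum_x a' x = \sum_x b' x.
  have h1 := sum_dec [set: T] ai; have h2 := sum_dec [set: T] bj.
  rewrite !in_setT !sumT in h1 h2.
  rewrite /a' /b'; move: h1 h2; rewrite sab; lia.
have cut' : cutcond (E :\ e) a' b'.
  move=> I2 K2; rewrite leqNgt; apply/negP => fail2.
  have c2 := cut I2 K2; rewrite (cntD1 _ _ eE) /= in c2.
  have da := sum_dec I2 ai; have db := sum_dec K2 bj.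
  rewrite -/a' -/b' in da db fail2.
  have [iI2 [jK2 t2]] : i \notin I2 /\ j \in K2 /\
      \sum_(x in I2) a x = \sum_(y in K2) b y + cnt (E :\ e) I2 K2.
    move: c2 da db fail2.
    set s1 := \sum_(x in I2) a x. set s2 := \sum_(y in K2) b y.
    set s1' := \sum_(x in I2) a' x. set s2' := \sum_(y in K2) b' y.
    set x2 := cnt (E :\ e) I2 K2.
    case: (i \in I2); case: (j \in K2) => /=; lia.
  have cU := cut (I1 :|: I2) (K1 :|: K2); rewrite (cntD1 _ _ eE) /= in cU.
  have cI := cut (I1 :&: I2) (K1 :&: K2); rewrite (cntD1 _ _ eE) /= in cI.
  rewrite !inE iI1 (negbTE iI2) jK2 /= !add0n in cU cI.
  have sm := cnt_submod (E :\ e) I1 I2 K1 K2.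
  have ma := sum_modular a I1 I2. have mb := sum_modular b K1 K2.
  move: cU cI sm ma mb c1 t2.
  set A1 := \sum_(x in I1) a x. set A2 := \sum_(x in I2) a x.
  set AU := \sum_(x in I1 :|: I2) a x. set AI := \sum_(x in I1 :&: I2) a x.
  set B1 := \sum_(x in K1) b x. set B2 := \sum_(x in K2) b x.
  set BU := \sum_(x in K1 :|: K2) b x. set BI := \sum_(x in K1 :&: K2) b x.
  set C1 := cnt (E :\ e) I1 K1. set C2 := cnt (E :\ e) I2 K2.
  set CU := cnt (E :\ e) (I1 :|: I2) (K1 :|: K2).
  set CI := cnt (E :\ e) (I1 :&: I2) (K1 :&: K2).
  lia.
have [F' [F'E [Fa Fb]]] := IH (E :\ e) a' b' ltE' sab' cut'.
have nF : e \notin F'.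
  by apply/negP => /(subsetP F'E); rewrite !inE eqxx.
exists (e |: F'); split; [|split].
- apply/subsetP => x; rewrite in_setU1 => /orP[/eqP->//|xF].
  by have := subsetP F'E x xF; rewrite inE => /andP[].
- move=> x; rewrite deg_row // Fa /a'.
  case: (eqVneq x i) => [->|_] /=; [by rewrite subnK | by rewrite subn0 addn0].
- move=> y; rewrite deg_col // Fb /b'.
  case: (eqVneq y j) => [->|_] /=; [by rewrite subnK | by rewrite subn0 addn0].
Qed.
End Real.

Lemma min_le (I : eqType) (r : seq I) (P : pred I) (F : I -> nat) x i :
  i \in r -> P i -> \big[minn/x]_(j <- r | P j) F j <= F i.
Proof.
elim: r => // h r IH; rewrite inE big_cons => /orP[/eqP<- ->|ir Pi].
  exact: geq_minl.
case: (P h); last exact: IH.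
exact: leq_trans (geq_minr _ _) (IH ir Pi).
Qed.

Lemma dmin_le n (a b : 'I_n -> nat) i : dmin a b <= minn (a i) (b i).
Proof. by apply: min_le; rewrite ?mem_index_enum. Qed.

Lemma dmax_ge n (a b : 'I_n -> nat) i : maxn (a i) (b i) <= dmax a b.
Proof. exact: (@leq_bigmax _ (fun i => maxn (a i) (b i)) i). Qed.

Lemma sum_bool (T : finType) (P : pred T) : \sum_x (P x : nat) = #|[set x | P x]|.
Proof.
rewrite -sum1_card [RHS]big_mkcond /=; apply: eq_bigr => x _; rewrite inE.
by case: (P x).
Qed.

Lemma cnt_offdiag (T : finType) (I K : {set T}) :
  #|I| * #|~: K| <= cnt [set x : T * T | x.1 != x.2] I K + minn #|I| #|~: K|.
Proof.
have full : \sum_(x : T * T) ((x.1 \in I) && (x.2 \notin K) : nat) = #|I| * #|~: K|.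
  rewrite sum_bool -cardsX; apply: eq_card => x; rewrite !inE.
  by case: x => u v /=.
rewrite -full (bigID (fun x : T * T => x \in [set x : T * T | x.1 != x.2])) /= leq_add2l.
rewrite (reindex_onto (fun y : T => (y, y)) fst); last first.
  by case=> u v; rewrite !inE negbK /= => /eqP->.
rewrite /= (eq_bigl xpredT); last by move=> y; rewrite !inE eqxx.
rewrite sum_bool leq_min; apply/andP; split; apply: subset_leq_card;
  apply/subsetP => y; rewrite !inE => /andP[].
- by [].
- by move=> _ ->.
Qed.

Lemma sum_split (T : finType) (f : T -> nat) (I : {set T}) :
  \sum_(i in I) f i + \sum_(i in ~: I) f i = \sum_i f i.
Proof.
rewrite [RHS](bigID (fun i => i \in I)) /=; congr (_ + _).
by apply: eq_bigl => i; rewrite inE.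
Qed.

From Stdlib Require Import Reals ZArith Lra Lia.


Lemma Rfloor_le x : (IZR (Rfloor x) <= x)%R.
Proof. unfold Rfloor. destruct (archimed x). rewrite minus_IZR. lra. Qed.

Lemma Rceil_ge x : (x <= IZR (Rceil x))%R.
Proof. unfold Rceil, Rfloor. destruct (archimed (- x)).
  rewrite opp_IZR minus_IZR. lra. Qed.

Lemma real_part (n m M S : nat) :
  (0 < n) ->
  let c := (INR S / INR n)%R in
  let disc := ((INR m + 1) ^ 2 + INR n * (c - 2 * INR m))%R in
  let kkv := if Rle_dec 0 disc then Rceil (INR m + 1 + sqrt disc) else 1%Z in
  (Z.of_nat M <= Rfloor (INR n * (c - INR m) / IZR kkv + INR m))%Z ->
  exists k : Z, (Z.of_nat m + 1 <= k)%Z /\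
   ((Z.of_nat m + 1) * (Z.of_nat m + 1) + Z.of_nat S <=
      (k - Z.of_nat m - 1) * (k - Z.of_nat m - 1) + 2 * Z.of_nat n * Z.of_nat m)%Z /\
   (k = Z.of_nat m + 1 \/ k * (Z.of_nat M - Z.of_nat m) + Z.of_nat n * Z.of_nat m <= Z.of_nat S)%Z.
Proof.
  move=> n0 c disc kkv HM.
  have nR : (0 < INR n)%R by apply: lt_0_INR; exact/ltP.
  have cE : (INR n * c = INR S)%R by rewrite /c; field; lra.
  have Hd : disc = ((INR m + 1) ^ 2 + INR S - 2 * INR n * INR m)%R.
    rewrite /disc -cE; ring.
  have Hd2 : disc = ((INR m + 1) * (INR m + 1) + INR S - 2 * INR n * INR m)%R.
    rewrite Hd; ring.
  have m0 := pos_INR m. have M0 := pos_INR M. have S0 := pos_INR S.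
  move: HM; rewrite /kkv; case: (Rle_dec 0 disc) => Hdisc HM.
  - set k := Rceil _ in HM *. rewrite /= in HM.
    have Hk := Rceil_ge (INR m + 1 + sqrt disc).
    fold k in Hk.
    have Hs := sqrt_pos disc.
    have Hss := sqrt_sqrt disc Hdisc.
    have Hk0 : (0 < IZR k)%R by lra.
    have HMr := Rfloor_le (INR n * (c - INR m) / IZR k + INR m).
    apply IZR_le in HM. rewrite -INR_IZR_INZ in HM.
    exists k; split; [|split].
    + apply: le_IZR. repeat rewrite ?plus_IZR ?mult_IZR ?minus_IZR; rewrite -?INR_IZR_INZ. lra.
    + apply: le_IZR. repeat rewrite ?plus_IZR ?mult_IZR ?minus_IZR; rewrite -?INR_IZR_INZ.
      have : (sqrt disc * sqrt disc <= (IZR k - INR m - 1) * (IZR k - INR m - 1))%R.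
        apply: Rmult_le_compat; lra.
      lra.
    + right. apply: le_IZR. repeat rewrite ?plus_IZR ?mult_IZR ?minus_IZR; rewrite -?INR_IZR_INZ.
      have H1 : (INR M - INR m <= INR n * (c - INR m) / IZR k)%R by lra.
      have H2 : ((INR M - INR m) * IZR k <= INR n * (c - INR m))%R.
        apply (Rmult_le_reg_r (/ IZR k)). by apply Rinv_0_lt_compat.
        rewrite Rmult_assoc Rinv_r ?Rmult_1_r; [|lra]. exact H1.
      nra.
  - exists (Z.of_nat m + 1)%Z; split; [lia|split; [|by left]].
    apply: le_IZR. repeat rewrite ?plus_IZR ?mult_IZR ?minus_IZR; rewrite -?INR_IZR_INZ. lra.
Qed.

Open Scope Z_scope.

Lemma arith_le (n m M S k p t x y : Z) :
  0 <= m -> m <= M -> M <= n - 1 -> n * m <= S -> S <= n * M ->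
  0 <= p -> p <= t -> t <= n ->
  m + 1 <= k -> (m+1)*(m+1) + S <= (k-m-1)*(k-m-1) + 2*n*m ->
  (k = m + 1 \/ k*(M-m) + n*m <= S) ->
  x <= p*M -> x + (n-p)*m <= S -> y <= t*M -> y + (n-t)*m <= S ->
  x + y <= S + p*t - p.
Proof.
  intros H0 H1 H2 H3 H4 H5 H6 H7 H8 H9 H10 H11 H12 H13 H14.
  assert (HB : p*M - (n-t)*m <= p*t - p -> x + y <= S + p*t - p) by lia.
  assert (HD : S - (2*n-p-t)*m <= p*t - p -> x + y <= S + p*t - p) by lia.
  assert (HA : (p+t)*M - S <= p*t - p -> x + y <= S + p*t - p) by lia.
  clear H11 H12 H13 H14.
  destruct (Z_le_gt_dec (M+1) t).
  { apply HB. assert (0 <= p*(t-M-1)) by (apply Z.mul_nonneg_nonneg; lia).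
    assert (0 <= (n-t)*m) by (apply Z.mul_nonneg_nonneg; lia). lia. }
  destruct (Z_le_gt_dec p m).
  { apply HB. destruct (Z_le_gt_dec m t).
    - assert (0 <= (m-p)*(M-t)) by (apply Z.mul_nonneg_nonneg; lia).
      assert (0 <= m*(n-1-M)) by (apply Z.mul_nonneg_nonneg; lia). lia.
    - assert (0 <= (m-p)*(m-t)) by (apply Z.mul_nonneg_nonneg; lia).
      assert (0 <= (m-p)*(n-m)) by (apply Z.mul_nonneg_nonneg; lia).
      assert (0 <= p*(n-1-M)) by (apply Z.mul_nonneg_nonneg; lia). lia. }
  destruct (Z_le_gt_dec k p).
  { apply HD. assert (0 <= (p-k)*(t-m-1)) by (apply Z.mul_nonneg_nonneg; lia).
    assert (0 <= (k-m)*(t-k)) by (apply Z.mul_nonneg_nonneg; lia). lia. }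
  destruct H10 as [H10|H10]; [lia|].
  destruct (Z.eq_dec M m).
  { apply HB. subst M.
    assert (0 <= (p-m)*(t-m-1)) by (apply Z.mul_nonneg_nonneg; lia).
    assert (0 <= m*(n-m-1)) by (apply Z.mul_nonneg_nonneg; lia). lia. }
  assert (Hkn : k <= n).
  { destruct (Z_le_gt_dec k n); auto.
    assert (0 < (k-n)*(M-m)) by (apply Z.mul_pos_pos; lia). lia. }
  assert (Hk1 : k * (M-m) <= k*k - 2*k*(m+1) + n*m) by lia.
  assert (Hk2 : p*(k*k - 2*k*(m+1) + n*m) <= k*((p-m)*(k-m) + m*(n-m) - p)).
  { assert (0 <= m*(k-p)*(n-k)).
    { apply Z.mul_nonneg_nonneg; [apply Z.mul_nonneg_nonneg|]; lia. }
    assert (0 <= p*k) by (apply Z.mul_nonneg_nonneg; lia). lia. }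
  assert (Hk3 : p*(M-m) <= (p-m)*(k-m) + m*(n-m) - p).
  { assert (0 <= p*(k*k - 2*k*(m+1) + n*m - k*(M-m))) by (apply Z.mul_nonneg_nonneg; lia).
    apply (Zmult_le_reg_r _ _ k); [lia|]. lia. }
  destruct (Z_le_gt_dec k t).
  { apply HB. assert (0 <= (p-m)*(t-k)) by (apply Z.mul_nonneg_nonneg; lia). lia. }
  apply HA. assert (0 <= (k-t)*((M-m)-(p-m))) by (apply Z.mul_nonneg_nonneg; lia). lia.
Qed.

Lemma arith2 (n m M S k p t x y pc tc : Z) :
  0 <= m -> m <= M -> M <= n - 1 -> n * m <= S -> S <= n * M ->
  0 <= p -> 0 <= t -> p + pc = n -> t + tc = n -> 0 <= pc -> 0 <= tc ->
  m + 1 <= k -> (m+1)*(m+1) + S <= (k-m-1)*(k-m-1) + 2*n*m ->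
  (k = m + 1 \/ k*(M-m) + n*m <= S) ->
  x <= p*M -> x + pc*m <= S -> y <= t*M -> y + tc*m <= S ->
  x + y <= S + p*t - Z.min p t.
Proof.
  intros. assert (pc = n - p) by lia. assert (tc = n - t) by lia. subst pc tc.
  destruct (Z.le_ge_cases p t).
  - rewrite Z.min_l; [|lia]. apply (@arith_le n m M S k p t x y); auto; lia.
  - rewrite Z.min_r; [|lia]. rewrite (Z.mul_comm p t).
    assert (y + x <= S + t * p - t) by (apply (@arith_le n m M S k t p y x); auto; lia).
    lia.
Qed.
Close Scope Z_scope.
Unset Implicit Arguments.

Theorem theorem6 (n : nat) (a b : 'I_n -> nat) :
  0 < n ->
  \sum_(i < n) a i = \sum_(i < n) b i ->
  dmin a b <= n - 1 ->
  (Z.of_nat (dmax a b) <= bound6 a b)%Z ->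
  dmax a b <= n - 1 ->
  graphic a b.
Proof.
move=> n0 sab hmin hb hmax.
have [k [Hk1 [Hk2 Hk3]]] := @real_part n (dmin a b) (dmax a b) (\sum_(i < n) a i) n0 hb.
have ha i : dmin a b <= a i /\ a i <= dmax a b.
  have := dmin_le a b i; have := dmax_ge a b i; rewrite leq_min geq_max.
  by move=> /andP[? _] /andP[? _].
have hb' i : dmin a b <= b i /\ b i <= dmax a b.
  have := dmin_le a b i; have := dmax_ge a b i; rewrite leq_min geq_max.
  by move=> /andP[_ ?] /andP[_ ?].
set m := dmin a b in hmin ha hb' Hk1 Hk2 Hk3.
set M := dmax a b in hmax ha hb' Hk1 Hk2 Hk3.
set S := \sum_(i < n) a i in sab Hk1 Hk2 Hk3.
have mM : m <= M.
  by case: (ha (Ordinal n0)) => h1 h2; exact: leq_trans h1 h2.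
have cardI (I : {set 'I_n}) : #|I| + #|~: I| = n by rewrite cardsC card_ord.
have uA (I : {set 'I_n}) : \sum_(i in I) a i <= #|I| * M.
  by rewrite -sum_nat_const; apply: leq_sum => i _; case: (ha i).
have lA (I : {set 'I_n}) : #|I| * m <= \sum_(i in I) a i.
  by rewrite -sum_nat_const; apply: leq_sum => i _; case: (ha i).
have uB (I : {set 'I_n}) : \sum_(i in I) b i <= #|I| * M.
  by rewrite -sum_nat_const; apply: leq_sum => i _; case: (hb' i).
have lB (I : {set 'I_n}) : #|I| * m <= \sum_(i in I) b i.
  by rewrite -sum_nat_const; apply: leq_sum => i _; case: (hb' i).
have SA (I : {set 'I_n}) : \sum_(i in I) a i + \sum_(i in ~: I) a i = S.
  exact: sum_split.
have SB (I : {set 'I_n}) : \sum_(i in I) b i + \sum_(i in ~: I) b i = S.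
  by rewrite sab; exact: sum_split.
have nmS : n * m <= S.
  by have := lA setT; rewrite cardsT card_ord sumT.
have SnM : S <= n * M.
  by have := uA setT; rewrite cardsT card_ord sumT.
have [F [FE [Fa Fb]]] : realizes [set x : 'I_n * 'I_n | x.1 != x.2] a b.
  apply: realize => //.
  move=> I K.
  have c := cnt_offdiag I K.
  have h1 := uA I. have h2 := lA (~: I). have h3 := SA I. have h4 := cardI I.
  have h5 := uB (~: K). have h6 := lB K. have h7 := SB K. have h8 := cardI K.
  have Z := @arith2 (Z.of_nat n) (Z.of_nat m) (Z.of_nat M) (Z.of_nat S) k
    (Z.of_nat #|I|) (Z.of_nat #|~: K|) (Z.of_nat (\sum_(i in I) a i))
    (Z.of_nat (\sum_(i in ~: K) b i)) (Z.of_nat #|~: I|) (Z.of_nat #|K|).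
  move: Z c h1 h2 h3 h4 h5 h6 h7 h8.
  set p := #|I|. set pc := #|~: I|. set t := #|~: K|. set tc := #|K|.
  set x := \sum_(i in I) a i. set y := \sum_(i in ~: K) b i.
  set x' := \sum_(i in ~: I) a i. set y' := \sum_(i in K) b i.
  set C := cnt _ I K.
  move=> Z c h1 h2 h3 h4 h5 h6 h7 h8.
  have {}Z := Z ltac:(lia) ltac:(lia) ltac:(lia) ltac:(lia) ltac:(lia) ltac:(lia) ltac:(lia) ltac:(lia) ltac:(lia) ltac:(lia) ltac:(lia) Hk1 Hk2 Hk3 ltac:(lia) ltac:(lia) ltac:(lia) ltac:(lia) .
  lia.
exists (fun i j => (i, j) \in F); split; [|split].
- move=> i; exact: Fa.
- move=> j; exact: Fb.
- move=> i; apply/negP => /(subsetP FE); by rewrite inE eqxx.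
Qed.
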